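(* Let $R$ be a semisimple ring and $(a,b)\in R^2$. Then the cyclic submodule $R(a,b)$ is free if and only if $(a,b)$ is admissible.
   Context: All rings are associative with identity $1\neq0$. $R^2$ is the free left $R$-module of pairs; $R(a,b)=\{(\alpha a,\alpha b):\alpha\in R\}$ is free if $r(a,b)=(0,0)$ implies $r=0$. A pair $(a,b)$ is admissible if there exist $c,d\in R$ such that $\begin{pmatrix}a&b\\c&d\end{pmatrix}\in GL_2(R)$. *)

(* Defs.v *)
From HB Require Import structures.
From mathcomp Require Import all_boot all_order all_algebra.
Set Implicit Arguments. Unset Strict Implicit. Unset Printing Implicit Defensive.
Import GRing.Theory.
Local Open Scope ring_scope.

Definition left_ideal (R : nzRingType) (I : R -> Prop) : Prop :=
  [/\ I 0, (forall x y, I x -> I y -> I (x + y)) & (forall r x, I x -> I (r * x))].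

(* R is (left) semisimple: R as a left R-module is semisimple, i.e. every
   left ideal is a direct summand of R. *)
Definition semisimple_ring (R : nzRingType) : Prop :=
  forall I : R -> Prop, left_ideal I ->
    exists J : R -> Prop, [/\ left_ideal J,
                  (forall x, I x -> J x -> x = 0) &
                  (forall x, exists i j, [/\ I i, J j & x = i + j])].

Definition mx2 (R : nzRingType) (a b c d : R) : 'M[R]_2 :=
  \matrix_(i < 2, j < 2)
     if i == 0 then (if j == 0 then a else b) else (if j == 0 then c else d).

Definition inGL2 (R : nzRingType) (M : 'M[R]_2) : Prop :=
  exists N : 'M[R]_2, M *m N = 1%:M /\ N *m M = 1%:M.

(* R(a,b) is free: r(a,b) = (0,0) implies r = 0. *)
Definition free_cyclic (R : nzRingType) (a b : R) : Prop :=
  forall r : R, r * a = 0 -> r * b = 0 -> r = 0.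

Definition admissible (R : nzRingType) (a b : R) : Prop :=
  exists c d : R, inGL2 (mx2 a b c d).

(* Main.v *)
Require Import Defs.
From HB Require Import structures.
From mathcomp Require Import all_boot all_order all_algebra.
From Stdlib Require Import Classical ClassicalEpsilon.
Set Implicit Arguments. Unset Strict Implicit. Unset Printing Implicit Defensive.
Import GRing.Theory.
Local Open Scope ring_scope.

Lemma li_opp (R : nzRingType) (I : R -> Prop) x : left_ideal I -> I x -> I (- x).
Proof. by case=> _ _ HM Hx; rewrite -mulN1r; apply: HM. Qed.

Lemma li_sub (R : nzRingType) (I : R -> Prop) x y : left_ideal I -> I x -> I y -> I (x - y).
Proof. move=> HI Hx Hy; case: (HI)=> _ HA _; apply: HA=> //; exact: li_opp. Qed.

Lemma idem_gen (R : nzRingType) (I : R -> Prop) :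
  semisimple_ring R -> left_ideal I -> exists e, I e /\ forall x, I x -> x = x * e.
Proof.
move=> Hs HI; have [J [HJ Hint Hsum]] := Hs I HI.
have [i [j [Ii Jj E]]] := Hsum 1.
exists i; split=> // x Ix.
have HX : x = x * i + x * j by rewrite -mulrDr -E mulr1.
have Hxj : x * j = x - x * i by apply/eqP; rewrite eq_sym subr_eq addrC -HX.
have : x * j = 0.
  apply: Hint; last by case: HJ => _ _; apply.
  rewrite Hxj; apply: li_sub=> //; by case: HI => _ _; apply.
by move=> H0; apply/eqP; rewrite -subr_eq0 -Hxj H0.
Qed.

Lemma regular (R : nzRingType) x : semisimple_ring R -> exists w : R, x = x * w * x.
Proof.
move=> Hs.
have HI : left_ideal (fun y : R => exists r, y = r * x).
  split; first by exists 0; rewrite mul0r.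
  - by move=> _ _ [r ->] [s ->]; exists (r + s); rewrite mulrDl.
  - by move=> r _ [s ->]; exists (r * s); rewrite mulrA.
have [e [[w ->] He]] := idem_gen Hs HI.
exists w; rewrite -mulrA; apply: He; exists 1; by rewrite mul1r.
Qed.

Lemma acc (R : nzRingType) (S : nat -> R -> Prop) : semisimple_ring R ->
  (forall n, left_ideal (S n)) -> (forall n x, S n x -> S n.+1 x) ->
  exists N, forall n x, S n x -> S N x.
Proof.
move=> Hs HS Hinc.
have mono : forall n m x, (n <= m)%N -> S n x -> S m x.
  move=> n m x /subnK <-; elim: (m - n)%N => [//|k IH] Hx.
  by rewrite addSn; apply: Hinc; apply: IH.
have HU : left_ideal (fun x => exists n, S n x).
  split; first by exists 0%N; case: (HS 0%N).
  - move=> x y [n Hx] [m Hy]; exists (maxn n m); case: (HS (maxn n m)) => _ HA _.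
    by apply: HA; [apply: mono Hx; apply: leq_maxl | apply: mono Hy; apply: leq_maxr].
  - by move=> r x [n Hx]; exists n; case: (HS n) => _ _; apply.
have [g [[N HN] Hg]] := idem_gen Hs HU.
exists N => n x Hx; rewrite (Hg x); last by exists n.
by case: (HS N) => _ _; apply.
Qed.

Lemma dfin (R : nzRingType) (x y : R) : semisimple_ring R -> x * y = 1 -> y * x = 1.
Proof.
move=> Hs Hxy.
pose S n := fun r : R => r * y ^+ n = 0.
have HS : forall n, left_ideal (S n).
  move=> n; split; rewrite /S; first by rewrite mul0r.
  - by move=> a b Ha Hb; rewrite mulrDl Ha Hb addr0.
  - by move=> r a Ha; rewrite -mulrA Ha mulr0.
have Hinc : forall n r, S n r -> S n.+1 r.
  by move=> n r; rewrite /S exprSr mulrA => ->; rewrite mul0r.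
have [N HN] := acc Hs HS Hinc.
have Hp : forall n, x ^+ n * y ^+ n = 1.
  elim=> [|n IH]; first by rewrite !expr0 mulr1.
  by rewrite exprS exprSr -!mulrA (mulrA (x ^+ n)) IH mul1r Hxy.
have H1 : S N.+1 ((1 - y * x) * x ^+ N).
  rewrite /S exprSr -mulrA (mulrA (x ^+ N)) Hp mul1r mulrBl mul1r -mulrA Hxy mulr1 subrr.
  done.
have := HN _ _ H1; rewrite /S -mulrA Hp mulr1 => /eqP; rewrite subr_eq0 => /eqP.
by move=> <-.
Qed.

Definition Img (R : nzRingType) (z : R) := fun x : R => exists r, x = r * z.

Lemma Img_li (R : nzRingType) (z : R) : left_ideal (Img z).
Proof.
split; first by exists 0; rewrite mul0r.
- by move=> _ _ [r ->] [s ->]; exists (r + s); rewrite mulrDl.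
- by move=> r _ [s ->]; exists (r * s); rewrite mulrA.
Qed.

Lemma maxexists (R : nzRingType) (f : R -> R) : semisimple_ring R ->
  exists t, forall t', (forall x, Img (f t) x -> Img (f t') x) ->
     forall x, Img (f t') x -> Img (f t) x.
Proof.
move=> Hs; apply: NNPP => Hn.
have H : forall t, exists t', (forall x, Img (f t) x -> Img (f t') x) /\
                              exists x, Img (f t') x /\ ~ Img (f t) x.
  move=> t; have := not_ex_all_not _ _ Hn t => /not_all_ex_not [t' Ht'].
  exists t'; have [H1 H2] := imply_to_and _ _ Ht'; split => //.
  have [x Hx] := not_all_ex_not _ _ H2; exists x.
  exact: imply_to_and.
pose F t := proj1_sig (constructive_indefinite_description _ (H t)).
have HF : forall t, (forall x, Img (f t) x -> Img (f (F t)) x) /\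
                    exists x, Img (f (F t)) x /\ ~ Img (f t) x.
  move=> t; exact: (proj2_sig (constructive_indefinite_description _ (H t))).
pose S n := Img (f (iter n F 0)).
have [N HN] := @acc R S Hs (fun n => Img_li _) (fun n x Hx => (HF _).1 x Hx).
have [x [Hx1 Hx2]] := (HF (iter N F 0)).2.
by apply: Hx2; apply: (HN N.+1).
Qed.

Lemma unit_regular (R : nzRingType) (a : R) : semisimple_ring R ->
  exists u v : R, [/\ u * v = 1, v * u = 1 & a = a * u * a].
Proof.
move=> Hs; have [w Hw] := regular a Hs.
set p := a * w; set e := w * a; set w' := w * a * w.
have pa : p * a = a by rewrite /p -Hw.
have ae : a * e = a by rewrite /e mulrA -Hw.
have aw' : a * w' = p by rewrite /w' /p !mulrA -Hw.
have w'a : w' * a = e by rewrite /w' /e -!mulrA (mulrA a w a) -Hw.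
have pp : p * p = p by rewrite /p mulrA -Hw.
have ee : e * e = e by rewrite {1}/e -mulrA ae.
have ew' : e * w' = w'.
  rewrite /w' /e; have -> : w * a * (w * a * w) = w * (a * w * a) * w by rewrite !mulrA.
  by rewrite -Hw.
have p1p : p * (1 - p) = 0 by rewrite mulrBr mulr1 pp subrr.
have e1e : (1 - e) * e = 0 by rewrite mulrBl mul1r ee subrr.
have e1w : (1 - e) * w' = 0 by rewrite mulrBl mul1r ew' subrr.
have [t Ht] := maxexists (fun t => a + (1 - p) * t * (1 - e)) Hs.
set z := a + (1 - p) * t * (1 - e).
have pz : p * z = a.
  by rewrite /z mulrDr pa !mulrA p1p !mul0r addr0.
have ze : z * e = a.
  by rewrite /z mulrDl ae -!mulrA e1e !mulr0 addr0.
have zw' : z * w' = p.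
  by rewrite /z mulrDl aw' -!mulrA e1w !mulr0 addr0.
have Ez : forall y, Img z (y * e).
  by move=> y; exists (y * w' * p); rewrite -mulrA pz -mulrA w'a.
pose L := fun r : R => r * z = 0.
have HL : left_ideal L.
  split; rewrite /L; first by rewrite mul0r.
  - by move=> x y Hx Hy; rewrite mulrDl Hx Hy addr0.
  - by move=> r x Hx; rewrite -mulrA Hx mulr0.
have [k [Lk Hk]] := idem_gen Hs HL.
have Lp : forall r, L r -> r * p = 0.
  by move=> r Hr; rewrite -zw' mulrA Hr mul0r.
have [J [HJ Hint Hsum]] := Hs (Img z) (Img_li z).
have [d [Jd Hd]] := idem_gen Hs HJ.
have L1p : forall y, L y -> y * (1 - p) = y.
  by move=> y Ly; rewrite mulrBr mulr1 (Lp y Ly) subr0.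
have Lk' : forall y, L y -> y * k = y by move=> y Ly; rewrite -Hk.
have krd : forall r0, k * r0 * d = 0.
  move=> r0.
  set s := (1 - p) * (k * r0 * d) * (1 - e).
  have Ez' : a + (1 - p) * (t + k * r0 * d) * (1 - e) = z + s.
    by rewrite /z /s (mulrDr (1 - p) t) (mulrDl ((1 - p) * t)) addrA.
  have Hsub : forall x, Img z x -> Img (z + s) x.
    move=> _ [r ->]; exists (r - r * (1 - p) * k).
    set y := r * (1 - p) * k.
    have Ly : L y by case: HL => _ _; apply.
    have yz : y * z = 0 by [].
    have ys : y * s = r * s.
      rewrite /s !mulrA L1p // Lk' //.
    by rewrite mulrBl (mulrDr r z s) (mulrDr y z s) yz ys add0r addrK.
  have := Ht (t + k * r0 * d); rewrite Ez' => H'.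
  have Hks : Img z (k * (z + s)) by apply: H' => //; exists k.
  have ks : k * (z + s) = k * r0 * d * (1 - e).
    by rewrite (mulrDr k z s) Lk add0r /s !mulrA (L1p k Lk) (Lk' k Lk).
  rewrite ks in Hks.
  apply: Hint; last by case: HJ => _ _; apply.
  have -> : k * r0 * d = k * r0 * d * (1 - e) + k * r0 * d * e.
    by rewrite -mulrDr subrK mulr1.
  by case: (Img_li z) => _ HA _; apply: HA.
have drk : forall r, d * r * k = 0.
  move=> r; have [v Hv] := regular (d * r * k) Hs.
  rewrite Hv; have -> : d * r * k * v * (d * r * k) = d * r * (k * v * d) * r * k.
    by rewrite !mulrA.
  by rewrite krd mulr0 !mul0r.
have C : forall N x (r : nat -> R), x * d * z ^+ N = \sum_(i < N) r i * d * z ^+ i -> x * d = 0.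
  elim=> [|N IH] x r.
  - by rewrite big_ord0 expr0 mulr1.
  - rewrite big_ord_recl /= expr0 mulr1 => H.
    set Y := x * d * z ^+ N - \sum_(i < N) r i.+1 * d * z ^+ i.
    have Es : \sum_(i < N) r i.+1 * d * z ^+ i * z = \sum_(i < N) r (bump 0 i) * d * z ^+ (bump 0 i).
      by apply: eq_bigr => i _; rewrite exprSr mulrA.
    have HY : Y * z = r 0%N * d.
      by rewrite /Y mulrBl mulr_suml -(mulrA (x * d)) -exprSr H Es addrK.
    have Y0z : Y * z = 0.
      apply: Hint; first by exists Y.
      by rewrite HY; case: HJ => _ _; apply.
    have Y0 : Y = 0.
      rewrite (Hk Y Y0z) /Y mulrBl mulr_suml big1 => [|i _].
        by rewrite -!mulrA (mulrA d) drk !mulr0 subr0.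
      by rewrite -!mulrA (mulrA d) drk !mulr0.
    apply: (IH x (fun i => r i.+1)).
    by apply/eqP; rewrite -subr_eq0; apply/eqP.
pose S n := fun x => exists r : nat -> R, x = \sum_(i < n) r i * d * z ^+ i.
have HS : forall n, left_ideal (S n).
  move=> n; split.
  - by exists (fun _ => 0); rewrite big1 // => i _; rewrite !mul0r.
  - move=> _ _ [r1 ->] [r2 ->]; exists (fun i => r1 i + r2 i).
    by rewrite -big_split; apply: eq_bigr => i _; rewrite !mulrDl.
  - move=> c _ [r1 ->]; exists (fun i => c * r1 i).
    by rewrite mulr_sumr; apply: eq_bigr => i _; rewrite !mulrA.
have Hinc : forall n x, S n x -> S n.+1 x.
  move=> n _ [r ->]; exists (fun i => if (i < n)%N then r i else 0).
  rewrite big_ord_recr /= ltnn !mul0r addr0.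
  by apply: eq_bigr => i _; rewrite ltn_ord.
have [N HN] := acc Hs HS Hinc.
have dzN : S N.+1 (d * z ^+ N).
  exists (fun i => if i == N then 1 else 0).
  rewrite big_ord_recr /= eqxx mul1r big1 ?add0r // => i _.
  by rewrite ltn_eqF // !mul0r.
have [r Hr] := HN _ _ dzN.
have d0 : d = 0 by have := C N 1 r; rewrite !mul1r; apply.
have [i [j [Ii Jj E1]]] := Hsum 1.
have j0 : j = 0 by rewrite (Hd j Jj) d0 mulr0.
have [w0 Hi] := Ii.
have Hwz : w0 * z = 1 by rewrite -Hi E1 j0 addr0.
have Hzw := dfin Hs Hwz.
exists w0, z; split => //.
have E : a * w0 * a = a.
  have -> : a * w0 * a = p * z * w0 * (z * e) by rewrite pz ze.
  by rewrite !mulrA -(mulrA (p * z) w0 z) Hwz mulr1 pz -Hw.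
by rewrite E.
Qed.

Lemma mx2_mul (R : nzRingType) (a b c d a' b' c' d' : R) :
  mx2 a b c d *m mx2 a' b' c' d' =
  mx2 (a * a' + b * c') (a * b' + b * d') (c * a' + d * c') (c * b' + d * d').
Proof.
apply/matrixP => i j; rewrite !mxE big_ord_recr big_ord_recl big_ord0 !mxE /= addr0.
case: i => -[|[|//]] Hi; case: j => -[|[|//]] Hj /=. all: by rewrite ?eqE /=.
Qed.

Lemma mx2_1 (R : nzRingType) : mx2 (1 : R) 0 0 1 = 1%:M.
Proof.
apply/matrixP => i j; rewrite !mxE.
case: i => -[|[|//]] Hi; case: j => -[|[|//]] Hj /=.
all: by rewrite ?eqE /=.
Qed.

Lemma GL2_mul (R : nzRingType) (A B : 'M[R]_2) : inGL2 A -> inGL2 B -> inGL2 (A *m B).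
Proof.
move=> [NA [HA1 HA2]] [NB [HB1 HB2]]; exists (NB *m NA); split.
- by rewrite mulmxA -(mulmxA A) HB1 mulmx1 HA1.
- by rewrite mulmxA -(mulmxA NB) HA2 mulmx1 HB2.
Qed.

Theorem mainTheorem11 (R : nzRingType) (a b : R) :
  semisimple_ring R -> (free_cyclic a b <-> admissible a b).
Proof.
move=> Hs; split; last first.
  move=> [c [d [N [HMN _]]]] r ra rb.
  have := congr1 (fun M : 'M[R]_2 => M 0 0) HMN.
  rewrite /= !mxE big_ord_recr big_ord_recl big_ord0 !mxE /= addr0 => E.
  have Er : r * (a * N (widen_ord (leqnSn 1) ord0) 0 + b * N ord_max 0) = r by rewrite E mulr1.
  by rewrite -Er mulrDr !mulrA ra rb !mul0r addr0.
move=> Hf.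
have [u [v [uv vu Hu]]] := unit_regular a Hs.
set g := a * u; set h := 1 - g.
have gv : g * v = a by rewrite /g -mulrA uv mulr1.
have gg : g * g = g by rewrite /g mulrA -Hu.
have hg : h * g = 0 by rewrite /h mulrBl mul1r gg subrr.
have gh : g * h = 0 by rewrite /h mulrBr mulr1 gg subrr.
have hh : h * h = h by rewrite {1}/h mulrBl mul1r gh subr0.
have [u' [v' [uv' vu' Hu']]] := unit_regular (h * b) Hs.
set k := h * b * u'.
have kk : k * k = k by rewrite /k mulrA -Hu'.
have hk : h * k = k by rewrite /k !mulrA hh.
have kh : k * h = h.
  set r := h - k * h.
  have rg : r * g = 0 by rewrite /r mulrBl hg -mulrA hg mulr0 subrr.
  have rk : r * k = 0 by rewrite /r mulrBl hk -mulrA hk kk subrr.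
  have rh : r * h = r by rewrite /r mulrBl hh -mulrA hh.
  have ra : r * a = 0 by rewrite -gv mulrA rg mul0r.
  have rhb : r * h * b = 0.
    have E1 : r * h * b * u' = r * k by rewrite /k !mulrA.
    by rewrite -[r * h * b]mulr1 -uv' mulrA E1 rk mul0r.
  have rb : r * b = 0.
    have -> : r * b = r * h * b + r * g * b.
      by rewrite -mulrDl -mulrDr /h subrK mulr1.
    by rewrite rhb rg mul0r addr0.
  have := Hf r ra rb; rewrite /r => /eqP; rewrite subr_eq0 => /eqP.
  by move=> E; rewrite -E.
exists (h * v), (h * b + (1 - k) * v').
have -> : mx2 a b (h * v) (h * b + (1 - k) * v') =
          mx2 g k h (1 - k) *m mx2 v b 0 v'.
  rewrite mx2_mul !mulr0 !addr0 gv; congr mx2.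
  by rewrite /k -(mulrA (h * b)) uv' mulr1 -mulrDl /h addrC subrK mul1r.
have gk : g * k = 0 by rewrite -hk mulrA gh mul0r.
have k1k : k * (1 - k) = 0 by rewrite mulrBr mulr1 kk subrr.
have gh1 : g + h = 1 by rewrite /h addrC subrK.
have e1 : (1 - k) * h = 0 by rewrite mulrBl mul1r kh subrr.
have e2 : (1 - k) * (1 - k) = 1 - k by rewrite mulrBl mul1r k1k subr0.
apply: GL2_mul.
- exists (mx2 g k h (1 - k)); rewrite mx2_mul -mx2_1; split; congr mx2.
  1-8: rewrite ?gg ?kh ?gk ?k1k ?hg ?e1 ?e2 ?hk ?addr0 ?gh1 //.
  1,2: exact: subrKC.
- exists (mx2 u (- (u * b * u')) 0 u'); rewrite !mx2_mul -mx2_1; split; congr mx2.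
  all: rewrite ?mulr0 ?mul0r ?addr0 ?add0r ?vu ?uv ?vu' ?uv' //.
  - by rewrite mulrN !mulrA vu mul1r addNr.
  - by rewrite mulNr -(mulrA (u * b) u' v') uv' mulr1 subrr.
Qed.
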